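(* For every graph $G$, $$\Gamma(G) \le \gamma_{\rm i}(G) \le \gamma_{\rm gr}(G).$$ Moreover, $\gamma_{\rm i}$ is incomparable with both $\gamma_g$ and $\mathrm{IR}$; that is, there exist graphs $G$ with $\gamma_{\rm i}(G) > \gamma_g(G)$ and graphs $G$ with $\gamma_{\rm i}(G) < \gamma_g(G)$, and there exist graphs $G$ with $\gamma_{\rm i}(G) > \mathrm{IR}(G)$ and graphs $G$ with $\gamma_{\rm i}(G) < \mathrm{IR}(G)$.
   Context: All graphs are finite and simple. $N[v]$ is the closed neighborhood of $v$, and $N[S]=\bigcup_{v\in S}N[v]$. A set $D$ is dominating if $N[D]=V(G)$. Indicated domination game on $G$: two players, Dominator and Staller, alternate. In each round Dominator indicates a vertex $v$ not yet dominated by the vertices previously selected by Staller, and Staller must select a vertex of $N[v]$, adding it to a set $D$. The game ends when $D$ is a dominating set. Dominator wants to minimize $|D|$ and Staller to maximize it; the size of $D$ under optimal play of both is the indicated domination number $\gamma_{\rm i}(G)$. $\Gamma(G)$ (upper domination number) is the maximum size of a minimal dominating set. For $S\subseteq V(G)$ and $x\in S$, a private neighbor of $x$ with respect to $S$ is a vertex of $N[S]\setminus N[S\setminus\{x\}]$; $S$ is irredundant if every vertex of $S$ has a private neighbor with respect to $S$, and $\mathrm{IR}(G)$ is the maximum size of a maximal irredundant set. A sequence $(v_1,\dots,v_k)$ of vertices is a dominating sequence if $N[v_i]\setminus\bigcup_{j<i}N[v_j]\ne\emptyset$ for each $i$ and $\{v_1,\dots,v_k\}$ dominates $G$; the Grundy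 domination number $\gamma_{\rm gr}(G)$ is the maximum length of a dominating sequence. Domination game: Dominator and Staller alternately select vertices of $G$, Dominator starting; a move is legal if the selected vertex dominates at least one vertex not dominated by previously selected vertices; the game ends when no legal move exists. Dominator wants to minimize and Staller to maximize the number of moves; the number of moves under optimal play is the game domination number $\gamma_g(G)$. *)

(* Defs.v *)
From mathcomp Require Import all_boot.
Set Implicit Arguments. Unset Strict Implicit. Unset Printing Implicit Defensive.

Record sgraph := SGraph {
  svert :> finType;
  sadj : rel svert;
  sadj_sym : symmetric sadj;
  sadj_irr : irreflexive sadj }.

Section Dom.
Variable G : sgraph.
Local Notation T := (svert G).
Local Notation e := (@sadj G).

Definition cnbhd (v : T) : {set T} := [set u | (u == v) || e v u].
Definition cnbhds (S : {set T}) : {set T} := \bigcup_(v in S) cnbhd v.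
Definition dominating (D : {set T}) : bool := cnbhds D == [set: T].

Definition minimal_dominating (D : {set T}) : bool :=
  dominating D && [forall D' : {set T}, (D' \proper D) ==> ~~ dominating D'].
Definition upper_domination : nat :=
  \max_(D : {set T} | minimal_dominating D) #|D|.

Definition irredundant (S : {set T}) : bool :=
  [forall x in S, exists w, w \in cnbhds S :\: cnbhds (S :\ x)].
Definition maximal_irredundant (S : {set T}) : bool :=
  irredundant S && [forall S' : {set T}, (S \proper S') ==> ~~ irredundant S'].
Definition upper_irredundance : nat :=
  \max_(S : {set T} | maximal_irredundant S) #|S|.

Fixpoint legal_from (S : {set T}) (s : seq T) : bool :=
  if s is v :: s' then ~~ (cnbhd v \subset cnbhds S) && legal_from (v |: S) s'
  else true.
Definition dominating_sequence (s : seq T) : bool :=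
  legal_from set0 s && dominating [set x in s].
(* every dominating sequence has length <= #|T|, so the range below is exhaustive *)
Definition grundy_domination : nat :=
  \max_(k < #|T|.+1 | [exists s : k.-tuple T, dominating_sequence s]) k.

(* Indicated domination game. ind_rem n D = number of further vertices added to
   D under optimal play, from position D (Staller's selections so far), with
   recursion fuel n.  Each round adds a new vertex, so fuel #|T| suffices.
   The min is over a nonempty set whenever it is used, so its seed #|T|.+1
   never contributes. *)
Fixpoint ind_rem (n : nat) (D : {set T}) : nat :=
  if n is n'.+1 then
    if dominating D then 0
    else \big[minn/#|T|.+1]_(v in ~: cnbhds D)
           \max_(u in cnbhd v) (ind_rem n' (u |: D)).+1
  else 0.
Definition indicated_domination : nat := ind_rem #|T| set0.

(* Each move dominates a new vertex, so fuel #|T| suffices. *)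
Definition legal_move (S : {set T}) (v : T) : bool :=
  ~~ (cnbhd v \subset cnbhds S).
Fixpoint game_rem (n : nat) (S : {set T}) (dom_turn : bool) : nat :=
  if n is n'.+1 then
    if dominating S then 0
    else if dom_turn then
      \big[minn/#|T|.+1]_(v | legal_move S v) (game_rem n' (v |: S) false).+1
    else \max_(v | legal_move S v) (game_rem n' (v |: S) true).+1
  else 0.
Definition game_domination : nat := game_rem #|T| set0 true.

End Dom.

(* Main.v *)
Require Import Defs.
From mathcomp Require Import all_boot.
From mathcomp Require Import zify.
Set Implicit Arguments. Unset Strict Implicit. Unset Printing Implicit Defensive.

Lemma bigmin_le (I : finType) (P : pred I) x (F : I -> nat) i0 :
  P i0 -> \big[minn/x]_(i | P i) F i <= F i0.
Proof.
move=> Pi0; move: (index_enum I) (mem_index_enum i0) => r.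
elim: r => [|a r IH] //; rewrite big_cons inE.
case: (eqVneq i0 a) => [<- _|_ /= /IH H]; first by rewrite Pi0 geq_minl.
case: ifP => // _; exact: leq_trans (geq_minr _ _) H.
Qed.

Section General.
Variable G : sgraph.
Local Notation T := (svert G).
Local Notation e := (@sadj G).
Local Notation cnbhd := (@cnbhd G).
Local Notation cnbhds := (@cnbhds G).
Local Notation dominating := (@dominating G).
Local Notation legal_from := (@legal_from G).
Local Notation ind_rem := (@ind_rem G).
Local Notation dominating_sequence := (@dominating_sequence G).
Local Notation minimal_dominating := (@minimal_dominating G).

Lemma in_cnbhd u v : (u \in cnbhd v) = (u == v) || e v u.
Proof. by rewrite inE. Qed.

Lemma cnbhd_sym u v : (u \in cnbhd v) = (v \in cnbhd u).
Proof. by rewrite !in_cnbhd eq_sym sadj_sym. Qed.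

Lemma cnbhd_self v : v \in cnbhd v.
Proof. by rewrite in_cnbhd eqxx. Qed.

Lemma in_cnbhds x (D : {set T}) : reflect (exists2 v, v \in D & x \in cnbhd v) (x \in cnbhds D).
Proof. exact: bigcupP. Qed.

Lemma dominatingP (D : {set T}) : reflect (forall x, x \in cnbhds D) (dominating D).
Proof.
apply: (iffP eqP) => [-> x|H]; first by rewrite inE.
by apply/setP => x; rewrite H inE.
Qed.

Lemma legal_cat S s t : legal_from S (s ++ t) = legal_from S s && legal_from (S :|: [set x in s]) t.
Proof.
elim: s S => [|v s IH] S /=.
  by rewrite (_ : S :|: [set x in [::]] = S) //; apply/setP => x; rewrite !inE orbF.
rewrite IH andbA; congr (_ && legal_from _ t).
by apply/setP => x; rewrite !inE orbA (orbC (x == v)).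
Qed.

Lemma legal_uniq S s : legal_from S s -> uniq s /\ all (fun x => x \notin S) s.
Proof.
elim: s S => [|v s IH] S //= /andP [Hv /IH [Hu Ha]].
have vS : v \notin S.
  apply: contra Hv => vS; apply/subsetP => x xv; apply/in_cnbhds; by exists v.
split.
  rewrite Hu andbT; apply/negP => vs.
  by move/allP: Ha => /(_ v vs); rewrite !inE eqxx.
rewrite vS /=; apply/allP => x xs; move/allP: Ha => /(_ x xs).
by rewrite !inE negb_or => /andP [].
Qed.

Lemma dom_seq_le_grundy s : dominating_sequence s -> size s <= grundy_domination G.
Proof.
move=> Hs; have /andP [Hl _] := Hs.
have [Hu _] := legal_uniq Hl.
have lt : size s < #|T|.+1.
  by rewrite ltnS -(card_uniqP Hu) max_card.
rewrite /grundy_domination.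
apply: (@leq_bigmax_cond _ (fun k : 'I_#|T|.+1 => [exists t : k.-tuple T, dominating_sequence t]) (fun k => nat_of_ord k) (Ordinal lt)).
by apply/existsP; exists (in_tuple s).
Qed.

Lemma cnbhds_setT : cnbhds [set: T] = [set: T].
Proof. apply/setP => x; rewrite inE; apply/in_cnbhds; exists x => //; exact: cnbhd_self. Qed.

Lemma ind_upper n s : legal_from set0 s -> #|T| <= n + size s ->
  size s + ind_rem n [set x in s] <= grundy_domination G.
Proof.
elim: n s => [|n IH] s Hl Hn /=.
  rewrite addn0; apply: dom_seq_le_grundy; rewrite /dominating_sequence Hl /=.
  have [Hu _] := legal_uniq Hl.
  have -> : [set x in s] = [set: T].
    apply/eqP; rewrite eqEcard subsetT /= cardsT cardsE (card_uniqP Hu).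
    by rewrite add0n in Hn.
  by rewrite /dominating cnbhds_setT.
case: ifP => Hd.
  by rewrite addn0; apply: dom_seq_le_grundy; rewrite /dominating_sequence Hl Hd.
have [v0 Hv0] : exists v0, v0 \notin cnbhds [set x in s].
  apply/existsP; apply: contraFT Hd => /existsPn H; apply/dominatingP => x.
  by have := H x; rewrite negbK.
have key : forall u, u \in cnbhd v0 ->
    size s + (ind_rem n (u |: [set x in s])).+1 <= grundy_domination G.
  move=> u uv.
  have Hl' : legal_from set0 (s ++ [:: u]).
    rewrite legal_cat Hl /= andbT; apply/negP => /subsetP /(_ v0).
    rewrite cnbhd_sym uv set0U => /(_ isT); exact/negP.
  have := IH (s ++ [:: u]) Hl'; rewrite size_cat /= addn1 addSn -addnS.
  have -> : [set x in s ++ [:: u]] = u |: [set x in s].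
    by apply/setP => x; rewrite !inE mem_cat mem_seq1 orbC.
  by apply; rewrite addnS -addSn.
have Hs := key v0 (cnbhd_self v0).
have Hmax : \max_(u in cnbhd v0) (ind_rem n (u |: [set x in s])).+1 <= grundy_domination G - size s.
  apply/bigmax_leqP => u uv; have := key u uv; lia.
have Hmin : \big[minn/#|T|.+1]_(v in ~: cnbhds [set x in s])
    \max_(u in cnbhd v) (ind_rem n (u |: [set x in s])).+1 <=
    \max_(u in cnbhd v0) (ind_rem n (u |: [set x in s])).+1.
  by apply: bigmin_le; rewrite inE.
have Hle : size s <= grundy_domination G by move: Hs; lia.
apply: leq_trans (leq_add (leqnn (size s)) (leq_trans Hmin Hmax)) _.
by rewrite subnKC.
Qed.

Lemma ind_le_grundy : indicated_domination G <= grundy_domination G.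
Proof.
have E : [set x in [::]] = set0 :> {set T} by apply/setP => x; rewrite !inE.
have := @ind_upper #|T| [::] isT; rewrite addn0 leqnn /= add0n E; exact.
Qed.

Lemma ind_lower (M : {set T}) : minimal_dominating M ->
  forall n (D : {set T}), D \subset M -> #|M :\: D| <= n -> #|M :\: D| <= ind_rem n D.
Proof.
case/andP => Mdom /forallP Mmin.
elim => [|n IH] D DM Hn /=; first by [].
case: ifP => Hd.
  case: (eqVneq D M) => [->|neq]; first by rewrite setDv cards0.
  have := Mmin D; rewrite properEneq neq DM /= Hd //.
apply: (big_ind (fun y => #|M :\: D| <= y)).
- by apply: leq_trans (max_card _) _.
- by move=> a b Ha Hb; rewrite leq_min Ha Hb.
move=> v; rewrite inE => Hv.
have /in_cnbhds [x xM vx] : v \in cnbhds M by move/dominatingP: Mdom.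
have xD : x \notin D.
  apply: contra Hv => xD; apply/in_cnbhds; by exists x.
have xv : x \in cnbhd v by rewrite cnbhd_sym.
apply: leq_trans (leq_bigmax_cond _ xv).
have Hc : #|M :\: D| = (#|M :\: (x |: D)|).+1.
  rewrite (cardsD1 x (M :\: D)) !inE xD xM /= add1n; congr (_.+1).
  by apply: eq_card => y; rewrite !inE negb_or andbA.
rewrite Hc ltnS; apply: IH.
  by rewrite subUset sub1set xM DM.
by rewrite Hc in Hn.
Qed.

Lemma upper_le_ind : upper_domination G <= indicated_domination G.
Proof.
apply/bigmax_leqP => M HM.
have := @ind_lower M HM #|T| set0 (sub0set _); rewrite setD0; apply.
exact: max_card.
Qed.

End General.

Lemma big_foldr_in (R : Type) (op : R -> R -> R) x (s : seq nat) (P : pred nat) (F : nat -> R)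
  (P' : nat -> bool) (F' : nat -> R) :
  (forall j, j \in s -> P j = P' j) -> (forall j, j \in s -> P' j -> F j = F' j) ->
  \big[op/x]_(j <- s | P j) F j = foldr (fun j acc => if P' j then op (F' j) acc else acc) x s.
Proof.
elim: s => [|a s IH] HP HF; first by rewrite big_nil.
rewrite big_cons /= HP ?mem_head //.
rewrite IH; last by move=> j js; apply: HF; rewrite inE js orbT.
  by case: ifP => // Pa; rewrite HF ?mem_head.
by move=> j js; apply: HP; rewrite inE js orbT.
Qed.

Fixpoint subs (s : seq nat) : seq (seq nat) :=
  if s is a :: s' then let r := subs s' in [seq a :: l | l <- r] ++ r else [:: [::]].

Lemma filter_subs (q : pred nat) s : filter q s \in subs s.
Proof.
elim: s => [|a s IH] /=; first by rewrite inE.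
rewrite mem_cat; case: (q a); last by rewrite IH orbT.
by rewrite (map_f (cons a) IH).
Qed.

Lemma irr_hered (G : sgraph) (S S' : {set svert G}) :
  irredundant S' -> S \subset S' -> irredundant S.
Proof.
move=> /forallP HS sub; apply/forallP => x; apply/implyP => xS.
have := HS x; rewrite (subsetP sub x xS) /= => /existsP [w]; rewrite inE => /andP [w1 w2].
apply/existsP; exists w; rewrite inE; apply/andP; split.
  apply: contra w1 => /bigcupP [v /setD1P [vx vS] wv].
  apply/bigcupP; exists v => //; apply/setD1P; split => //; exact: (subsetP sub).
move/bigcupP: w2 => [v vS' wv]; case: (eqVneq v x) => [vx|vx].
  apply/bigcupP; exists v => //; by rewrite vx.
case/negP: w1; apply/bigcupP; exists v => //; exact/setD1P.
Qed.

Section Conc.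
Variable m : nat.
Local Notation n := m.+1.
Variable adj : nat -> nat -> bool.

Definition bigC {R} (op : R -> R -> R) (x : R) (P : nat -> bool) (F : nat -> R) :=
  foldr (fun j acc => if P j then op (F j) acc else acc) x (iota 0 n).

Lemma bigE (R : Type) (op : R -> R -> R) x (P : pred 'I_n) (F : 'I_n -> R) (P' : nat -> bool) (F' : nat -> R) :
  (forall i : 'I_n, P i = P' i) -> (forall i : 'I_n, P i -> F i = F' i) ->
  \big[op/x]_(i | P i) F i = bigC op x P' F'.
Proof.
move=> HP HF; rewrite big_mknat /index_iota subn0 /bigC; apply: big_foldr_in => j.
  by rewrite mem_iota /= => jn; rewrite HP inordK.
rewrite mem_iota /= => jn Pj; rewrite HF ?inordK //; by rewrite HP inordK.
Qed.

Definition addC (u : nat) (p : nat -> bool) := fun i => (i == u) || p i.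
Definition cnbC p x := has (fun v => p v && ((x == v) || adj v x)) (iota 0 n).
Definition domC p := all (cnbC p) (iota 0 n).
Fixpoint indC k p := if k is k'.+1 then
  if domC p then 0 else
  bigC minn n.+1 (fun v => ~~ cnbC p v)
    (fun v => bigC maxn 0 (fun u => (u == v) || adj v u) (fun u => (indC k' (addC u p)).+1))
  else 0.
Definition legC p v := ~~ all (cnbC p) [seq u <- iota 0 n | (u == v) || adj v u].
Fixpoint gameC k p (t : bool) := if k is k'.+1 then
  if domC p then 0 else
  if t then bigC minn n.+1 (legC p) (fun v => (gameC k' (addC v p) false).+1)
  else bigC maxn 0 (legC p) (fun v => (gameC k' (addC v p) true).+1)
  else 0.
Definition irrC p := all (fun x => p x ==> has (fun w => cnbC p w && ~~ cnbC (fun i => (i != x) && p i) w) (iota 0 n)) (iota 0 n).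
Definition cardC p := bigC addn 0 p (fun _ => 1).

Hypothesis adj_sym : forall i j, adj i j = adj j i.
Hypothesis adj_irr : forall i, adj i i = false.

Definition cg : sgraph := @SGraph 'I_n (fun x y => adj x y) (fun x y => adj_sym x y) (fun x => adj_irr x).

Local Notation T := 'I_n.
Definition relS (D : {set T}) (p : nat -> bool) := forall i : T, (i \in D) = p i.

Lemma ltn_iota j : (j \in iota 0 n) = (j < n).
Proof. by rewrite mem_iota. Qed.

Lemma rel_cnb D p : relS D p -> forall x : T, (x \in cnbhds (G:=cg) D) = cnbC p x.
Proof.
move=> H x; rewrite /cnbhds; apply/bigcupP/hasP => [[v vD]|[j]].
  rewrite inE => xv; exists (val v); first by rewrite ltn_iota ltn_ord.
  by rewrite -H vD.
rewrite ltn_iota => jn /andP [pj xj]; exists (Ordinal jn); first by rewrite H.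
by rewrite inE.
Qed.

Lemma rel_dom D p : relS D p -> dominating (G:=cg) D = domC p.
Proof.
move=> H; apply/eqP/allP => [E j|A].
  rewrite ltn_iota => jn; have := rel_cnb H (Ordinal jn); rewrite E inE; by move <-.
apply/setP => x; rewrite inE (rel_cnb H); apply: A; by rewrite ltn_iota.
Qed.

Lemma rel_add D p (u : T) : relS D p -> relS (u |: D) (addC u p).
Proof. by move=> H i; rewrite !inE H. Qed.

Lemma rel0 : relS set0 (fun _ => false).
Proof. by move=> i; rewrite inE. Qed.

Lemma cardT : #|svert cg| = n.
Proof. exact: card_ord. Qed.

Lemma rel_ind k D p : relS D p -> ind_rem (G:=cg) k D = indC k p.
Proof.
elim: k D p => [|k IH] D p H //=.
rewrite (rel_dom H); case: ifP => // _; rewrite cardT.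
apply: bigE => [i|i _]; first by rewrite inE (rel_cnb H).
apply: bigE => [u|u _]; first by rewrite inE.
by rewrite (IH _ (addC u p)) //; apply: rel_add.
Qed.

Lemma rel_legal D p (v : T) : relS D p -> legal_move (G:=cg) D v = legC p v.
Proof.
move=> H; rewrite /legal_move /legC; congr (~~ _).
apply/subsetP/allP => [S j|A x].
  rewrite mem_filter ltn_iota => /andP [jv jn].
  by rewrite -(rel_cnb H (Ordinal jn)); apply: S; rewrite inE.
rewrite inE (rel_cnb H) => xv; apply: A; by rewrite mem_filter xv ltn_iota /=.
Qed.

Lemma rel_game k D p t : relS D p -> game_rem (G:=cg) k D t = gameC k p t.
Proof.
elim: k D p t => [|k IH] D p t H //=.
rewrite (rel_dom H); case: ifP => // _; rewrite cardT.
case: t.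
  apply: bigE => [i|i _]; first by rewrite (rel_legal _ H).
  by rewrite (IH _ (addC i p)) //; apply: rel_add.
apply: bigE => [i|i _]; first by rewrite (rel_legal _ H).
by rewrite (IH _ (addC i p)) //; apply: rel_add.
Qed.

Lemma rel_irr D p : relS D p -> irredundant (G:=cg) D = irrC p.
Proof.
move=> H; apply/forallP/allP => [A j|A x].
  rewrite ltn_iota => jn; have := A (Ordinal jn); rewrite H.
  case: (p j) => //; rewrite !implyTb => /existsP [w]; rewrite inE => /andP [w1 w2].
  apply/hasP; exists (val w); first by rewrite ltn_iota ltn_ord.
  rewrite -(rel_cnb H) w2 -(rel_cnb (D := D :\ Ordinal jn)) ?w1 //.
  by move=> i; rewrite !inE H.
apply/implyP => xD; have := A (val x); rewrite ltn_iota ltn_ord => /(_ isT); rewrite -H xD implyTb.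
case/hasP => j; rewrite ltn_iota => jn /andP [j1 j2].
apply/existsP; exists (Ordinal jn); rewrite inE.
have Hx : relS (D :\ x) (fun i => (i != val x) && p i) by move=> i; rewrite !inE H.
by rewrite (rel_cnb H) (rel_cnb Hx) j1 j2.
Qed.

Lemma rel_card D p : relS D p -> #|D| = cardC p.
Proof.
move=> H; rewrite -sum1_card; apply: bigE => //.
Qed.

Lemma ind_eq : indicated_domination cg = indC n (fun _ => false).
Proof. by rewrite /indicated_domination cardT; apply: rel_ind; apply: rel0. Qed.

Lemma game_eq : game_domination cg = gameC n (fun _ => false) true.
Proof. by rewrite /game_domination cardT; apply: rel_game; apply: rel0. Qed.

Lemma IR_le k :
  all (fun l => irrC (fun j => j \in l) ==> (cardC (fun j => j \in l) <= k)) (subs (iota 0 n)) ->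
  upper_irredundance cg <= k.
Proof.
move=> /allP A; apply/bigmax_leqP => S /andP [HS _].
pose q := fun j => (inord j : 'I_n) \in S.
have R : relS S (fun j => j \in filter q (iota 0 n)).
  by move=> i; rewrite mem_filter ltn_iota ltn_ord andbT /q inord_val.
have := A _ (filter_subs q _); rewrite -(rel_irr R) HS /= -(rel_card R); exact.
Qed.

Lemma IR_ge k (l : seq nat) :
  irrC (fun j => j \in l) ->
  all (fun x => (x \in l) || ~~ irrC (addC x (fun j => j \in l))) (iota 0 n) ->
  k <= cardC (fun j => j \in l) -> k <= upper_irredundance cg.
Proof.
move=> Hi /allP Hm Hk.
pose S : {set 'I_n} := [set i : 'I_n | val i \in l].
have R : relS S (fun j => j \in l) by move=> i; rewrite inE.
rewrite /upper_irredundance; apply: (bigmax_sup S); last by rewrite (rel_card R).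
rewrite /maximal_irredundant (rel_irr R) Hi /=; apply/forallP => S'; apply/implyP.
case/properP => sub [x xS' xS]; apply/negP => HS'.
have : irredundant (G := cg) (x |: S).
  by apply: irr_hered HS' _; rewrite subUset sub1set xS' sub.
rewrite (rel_irr (rel_add x R)).
have := Hm (val x); rewrite ltn_iota ltn_ord => /(_ isT).
by rewrite -R (negbTE xS) /= => /negbTE ->.
Qed.

End Conc.

Definition adjL (es : seq (nat * nat)) (i j : nat) := ((i, j) \in es) || ((j, i) \in es).
Lemma adjL_sym es i j : adjL es i j = adjL es j i.
Proof. by rewrite /adjL orbC. Qed.
Lemma adjL_irr es : all (fun p => p.1 != p.2) es -> forall i, adjL es i i = false.
Proof.
move=> A i; rewrite /adjL orbb; apply/negP => H.
by move/allP: A => /(_ _ H) /=; rewrite eqxx.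
Qed.

Definition mkG m es (H : all (fun p => p.1 != p.2) es) : sgraph :=
  @cg m (adjL es) (adjL_sym es) (adjL_irr H).

Definition es1 := [:: (0,1); (0,2)].
Definition G1 := @mkG 2 es1 isT.

Lemma ex1 : indicated_domination G1 > game_domination G1.
Proof.
rewrite /G1 /mkG ind_eq game_eq.
by vm_compute.
Qed.

Definition es2 := [:: (0,1); (0,3); (0,5); (1,2); (1,5); (2,3); (2,4); (3,4)].
Definition G2 := @mkG 5 es2 isT.

Lemma ex2 : indicated_domination G2 < game_domination G2.
Proof.
rewrite /G2 /mkG ind_eq game_eq.
by vm_compute.
Qed.

Definition es3 := [:: (0,1); (1,2); (2,3); (3,4); (4,0)].
Definition G3 := @mkG 4 es3 isT.

Lemma ex3 : indicated_domination G3 > upper_irredundance G3.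
Proof.
apply: (@leq_trans 3); last by rewrite /G3 /mkG ind_eq; vm_compute.
rewrite ltnS; apply: IR_le; by vm_compute.
Qed.

Definition es4 := [:: (0,1); (0,2); (0,5); (0,7); (1,2); (1,7); (2,4); (2,7); (3,4); (3,5); (3,6); (4,5); (4,6); (5,6); (6,7)].
Definition G4 := @mkG 7 es4 isT.

Lemma ex4 : indicated_domination G4 < upper_irredundance G4.
Proof.
apply: (@leq_trans 3); first by rewrite /G4 /mkG ind_eq; vm_compute.
apply: (@IR_ge _ _ _ _ _ [:: 4; 5; 6]); by vm_compute.
Qed.

Theorem proposition3p1 :
  (forall G : sgraph,
     upper_domination G <= indicated_domination G <= grundy_domination G) /\
  (exists G : sgraph, indicated_domination G > game_domination G) /\
  (exists G : sgraph, indicated_domination G < game_domination G) /\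
  (exists G : sgraph, indicated_domination G > upper_irredundance G) /\
  (exists G : sgraph, indicated_domination G < upper_irredundance G).
Proof.
split; first by move=> G; rewrite upper_le_ind ind_le_grundy.
split; first by exists G1; exact: ex1.
split; first by exists G2; exact: ex2.
split; first by exists G3; exact: ex3.
by exists G4; exact: ex4.
Qed.
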